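(* Let $r,K,\alpha,\phi,c,m_1,m_2,\lambda,a,d,\delta,\gamma,\sigma,\eta$ be positive constants with $\phi<1$ and $m_1>m_2$, and consider the system \[ \begin{cases} \dot X = rX\left(1-\frac{X}{K}\right)-\frac{\alpha XS}{c+X}-\frac{\phi\alpha XI}{c+X},\\[1mm] \dot S = \frac{m_1\alpha XS}{c+X}-\frac{\lambda AS}{a+A}-dS,\\[1mm] \dot I = \frac{m_2\phi\alpha XI}{c+X}+\frac{\lambda AS}{a+A}-(d+\delta)I,\\[1mm] \dot A = \gamma+\sigma(S+I)-\eta A. \end{cases} \] Let $M:=\max\{X(0),K\}$ and \[ \mathcal D:=\left\{(X,S,I,A)\in\mathbb R_+^4:\ 0\le X\le M,\ 0\le X+S+I\le \frac{(r+4d)M}{4d},\ 0\le A\le \frac{4rd+\sigma(r+4d)M}{4\eta rd}\right\}. \] Then every solution of the system that starts in $\mathcal D$ is uniformly bounded.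
   Context: $\mathbb R_+^4$ denotes the closed non-negative orthant. *)

(* Defs.v *)
From Stdlib Require Import Reals.
From Coquelicot Require Import Coquelicot.
Open Scope R_scope.

Definition fX (r K alpha phi c : R) (X S I : R) : R :=
  r * X * (1 - X / K) - alpha * X * S / (c + X) - phi * alpha * X * I / (c + X).

Definition fS (alpha c m1 lambda a d : R) (X S A : R) : R :=
  m1 * alpha * X * S / (c + X) - lambda * A * S / (a + A) - d * S.

Definition fI (alpha phi c m2 lambda a d delta : R) (X S I A : R) : R :=
  m2 * phi * alpha * X * I / (c + X) + lambda * A * S / (a + A) - (d + delta) * I.

Definition fA (gamma sigma eta : R) (S I A : R) : R :=
  gamma + sigma * (S + I) - eta * A.

(* The region D (with M := max{X(0), K} passed as parameter). *)
Definition in_D (r d sigma eta M : R) (X S I A : R) : Prop :=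
  0 <= X /\ 0 <= S /\ 0 <= I /\ 0 <= A /\
  X <= M /\
  0 <= X + S + I /\ X + S + I <= (r + 4 * d) * M / (4 * d) /\
  A <= (4 * r * d + sigma * (r + 4 * d) * M) / (4 * eta * r * d).

(* Main.v *)
Require Import Defs.
From Stdlib Require Import Reals Lra Psatz Classical.
From Coquelicot Require Import Coquelicot.
Open Scope R_scope.
Lemma ballR x e y : ball x e y <-> Rabs (y - x) < e.
Proof. unfold ball; simpl; unfold AbsRing_ball, abs, minus, plus, opp; simpl. tauto. Qed.
Definition RC (f : R -> R) := forall t, 0 <= t -> forall e, 0 < e -> exists d, 0 < d /\
  forall y, 0 <= y -> Rabs (y - t) < d -> Rabs (f y - f t) < e.
Lemma RC_of V dV : (forall t, 0 < t -> is_derive V t (dV t)) ->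
  filterlim V (at_right 0) (locally (V 0)) -> RC V.
Proof.
intros HD HC t ht e he.
destruct (Rle_lt_or_eq_dec 0 t ht) as [tp|t0].
- assert (C : continuous V t) by (apply ex_derive_continuous; eexists; apply HD; auto).
  apply filterlim_locally with (eps := mkposreal e he) in C.
  destruct C as [d Hd]. exists d. split. apply cond_pos. intros y _ hy.
  apply ballR. apply Hd. apply ballR. auto.
- subst t. apply filterlim_locally with (eps := mkposreal e he) in HC.
  destruct HC as [d Hd]. exists d. split. apply cond_pos. intros y hy0 hy.
  destruct (Rle_lt_or_eq_dec 0 y hy0) as [yp|y0].
  + apply ballR. apply Hd. apply ballR. auto. auto.
  + subst y. unfold Rminus. rewrite Rplus_opp_r, Rabs_R0. auto.
Qed.
Lemma clamp_lip a b x y : a <= b -> Rabs (Rmin b (Rmax y a) - Rmin b (Rmax x a)) <= Rabs (y - x).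
Proof. intros. unfold Rmin, Rmax; repeat destruct Rle_dec; unfold Rabs; repeat destruct Rcase_abs; lra. Qed.

Lemma barrier f f' t0 t1 G : 0 <= t0 -> t0 < t1 -> RC f ->
  (forall t, t0 < t < t1 -> is_derive f t (f' t)) -> 0 <= f t0 ->
  (forall t, t0 < t < t1 -> f t < 0 -> G * f t <= f' t) -> 0 <= f t1.
Proof.
intros h0 h01 Hrc Hd Hf0 Hsg.
destruct (Rle_or_lt 0 (f t1)) as [ok|neg]; auto. exfalso.
set (E := fun t => t0 <= t <= t1 /\ 0 <= f t).
destruct (completeness E) as [u [Hub Hlub]].
{ exists t1. intros x [Hx _]. lra. }
{ exists t0. split; lra. }
assert (Hu0 : t0 <= u) by (apply Hub; split; lra).
assert (Hu1 : u <= t1) by (apply Hlub; intros x [Hx _]; lra).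
assert (Hfu : 0 <= f u).
{ destruct (Rle_or_lt 0 (f u)) as [ok|fn]; auto. exfalso.
  destruct (Hrc u ltac:(lra) (- f u) ltac:(lra)) as [d [dp Hdd]].
  assert (u <= u - d/2); [|lra].
  apply Hlub. intros x [Hx Hfx].
  destruct (Rle_or_lt x (u - d/2)) as [ok|bad]; auto. exfalso.
  assert (x <= u) by (apply Hub; split; auto).
  assert (Rabs (f x - f u) < - f u) by (apply Hdd; [lra| unfold Rabs; destruct Rcase_abs; lra]).
  revert H0; unfold Rabs; destruct Rcase_abs; lra. }
assert (Hut : u < t1) by (destruct (Rle_lt_or_eq_dec _ _ Hu1); auto; subst; lra).
assert (Hneg : forall t, u < t <= t1 -> f t < 0).
{ intros t Ht. destruct (Rle_or_lt 0 (f t)) as [p|n]; auto.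
  assert (t <= u) by (apply Hub; split; [lra|auto]). lra. }
set (cl := fun t => Rmin t1 (Rmax t u)).
set (h := fun t => exp (- G * t) * f (cl t)).
set (D := fun t => exp (- G * t) * (f' t - G * f t)).
assert (HD : forall x, u < x < t1 -> is_derive h x (Rmax 0 (D x))).
{ intros x Hx.
  assert (Dp : 0 <= D x).
  { unfold D. apply Rmult_le_pos. left; apply exp_pos.
    assert (G * f x <= f' x) by (apply Hsg; [lra| apply Hneg; lra]). lra. }
  rewrite Rmax_right by auto.
  apply is_derive_ext_loc with (f := fun t => exp (- G * t) * f t).
  { assert (pp : 0 < Rmin (x - u) (t1 - x)) by (apply Rmin_pos; lra).
    exists (mkposreal _ pp). intros y Hy. apply ballR in Hy. simpl in Hy.
    assert (u < y < t1).
    { assert (Hy2 : Rabs (y - x) < Rmin (x-u) (t1-x)) by (apply ballR; exact Hy). revert Hy2. unfold Rmin. destruct Rle_dec; unfold Rabs; destruct Rcase_abs; lra. }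
    unfold h, cl. rewrite (Rmax_left y u) by lra. rewrite (Rmin_right t1 y) by lra. auto. }
  assert (He : is_derive (fun t => exp (- G * t)) x (exp (- G * x) * (- G))).
  { auto_derive; auto; ring. }
  assert (Hm := is_derive_mult _ _ _ _ _ He (Hd x ltac:(lra)) ltac:(intros; apply Rmult_comm)).
  unfold D. replace (exp (- G * x) * (f' x - G * f x)) with
    (plus (mult (exp (- G * x) * - G) (f x)) (mult (exp (- G * x)) (f' x))).
  exact Hm. unfold plus, mult; simpl. ring. }
assert (HC : forall x, u <= x <= t1 -> continuity_pt h x).
{ intros x Hx. unfold h. apply continuity_pt_mult.
  - apply derivable_continuous_pt. apply derivable_pt_comp.
    apply derivable_pt_mult. apply derivable_pt_const. apply derivable_pt_id.
    apply derivable_pt_exp.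
  - unfold continuity_pt, continue_in, limit1_in, limit_in; simpl; unfold R_dist.
    intros e he.
    assert (c0 : 0 <= cl x) by (unfold cl, Rmin, Rmax; repeat destruct Rle_dec; lra).
    destruct (Hrc (cl x) c0 e he) as [d [dp Hdd]].
    exists d. split; auto. intros y [_ Hy]. apply Hdd.
    unfold cl, Rmin, Rmax; repeat destruct Rle_dec; lra.
    eapply Rle_lt_trans; [apply clamp_lip; lra| exact Hy]. }
destruct (MVT_gen h u t1 (fun t => Rmax 0 (D t))) as [xi [Hxi Heq]].
{ rewrite Rmin_left, Rmax_right by lra. exact HD. }
{ rewrite Rmin_left, Rmax_right by lra. exact HC. }
assert (0 <= Rmax 0 (D xi) * (t1 - u)).
{ apply Rmult_le_pos. apply Rmax_l. lra. }
assert (h t1 < 0).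
{ unfold h, cl. rewrite (Rmax_left t1 u) by lra. rewrite Rmin_left by lra.
  assert (0 < exp (- G * t1)) by apply exp_pos. nra. }
assert (0 <= h u).
{ unfold h, cl. rewrite Rmax_left by lra. rewrite Rmin_right by lra.
  assert (0 < exp (- G * u)) by apply exp_pos. nra. }
lra.
Qed.

Lemma cont_ind (Q : R -> Prop) : Q 0 ->
  (forall s, 0 <= s -> (forall tau, 0 <= tau <= s -> Q tau) -> exists eps, 0 < eps /\ forall tau, s <= tau <= s + eps -> Q tau) ->
  (forall s, 0 < s -> (forall tau, 0 <= tau < s -> Q tau) -> Q s) ->
  forall t, 0 <= t -> Q t.
Proof.
intros Q0 Hloc Hcl T hT.
destruct (classic (Q T)) as [ok|nQ]; auto. exfalso.
assert (Tp : 0 < T) by (destruct (Rle_lt_or_eq_dec _ _ hT); auto; subst; tauto).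
set (E := fun t => 0 <= t <= T /\ forall tau, 0 <= tau <= t -> Q tau).
destruct (completeness E) as [s [Hub Hlub]].
{ exists T. intros x [Hx _]. lra. }
{ exists 0. split. lra. intros tau Ht. replace tau with 0 by lra. auto. }
assert (Hs0 : 0 <= s) by (apply Hub; split; [lra| intros tau Ht; replace tau with 0 by lra; auto]).
assert (HsT : s <= T) by (apply Hlub; intros x [Hx _]; lra).
assert (Hlt : forall tau, 0 <= tau < s -> Q tau).
{ intros tau Ht. destruct (classic (exists e, E e /\ tau < e)) as [[e [[_ He] Hte]]|nex].
  - apply He. lra.
  - assert (s <= tau); [|lra]. apply Hlub. intros x Ex.
    destruct (Rle_or_lt x tau); auto. exfalso. apply nex. exists x. auto. }
assert (Hall : forall tau, 0 <= tau <= s -> Q tau).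
{ intros tau Ht. destruct (Rle_lt_or_eq_dec tau s) as [l|e]; [lra| apply Hlt; lra|].
  subst tau. destruct (Rle_lt_or_eq_dec 0 s Hs0) as [sp|s0].
  apply Hcl; auto. rewrite <- s0. auto. }
destruct (Hloc s Hs0 Hall) as [eps [ep Heps]].
destruct (Rle_or_lt T (s + eps)) as [big|small].
- apply nQ. apply Heps. lra.
- assert (s + eps <= s); [|lra]. apply Hub. split. lra.
  intros tau Ht. destruct (Rle_or_lt tau s). apply Hall; lra. apply Heps; lra.
Qed.

Lemma closed_nonneg V s : RC V -> 0 < s -> (forall tau, 0 <= tau < s -> 0 <= V tau) -> 0 <= V s.
Proof.
intros Hrc sp H. destruct (Rle_or_lt 0 (V s)) as [ok|n]; auto. exfalso.
destruct (Hrc s ltac:(lra) (- V s) ltac:(lra)) as [d [dp Hd]].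
set (tau := s - Rmin s d / 2).
assert (Hm1 : Rmin s d <= s) by apply Rmin_l. assert (Hm2 : Rmin s d <= d) by apply Rmin_r.
assert (Hm3 : 0 < Rmin s d) by (apply Rmin_pos; lra).
assert (Rabs (V tau - V s) < - V s) by (apply Hd; unfold tau; [lra| unfold Rabs; destruct Rcase_abs; lra]).
assert (0 <= V tau) by (apply H; unfold tau; lra).
revert H0. unfold Rabs; destruct Rcase_abs; lra.
Qed.

Lemma RC_plus f g : RC f -> RC g -> RC (fun t => f t + g t).
Proof.
intros Hf Hg t ht e he.
destruct (Hf t ht (e/2) ltac:(lra)) as [d1 [d1p H1]].
destruct (Hg t ht (e/2) ltac:(lra)) as [d2 [d2p H2]].
exists (Rmin d1 d2). split. apply Rmin_pos; auto.
intros y hy hyt. assert (Rmin d1 d2 <= d1) by apply Rmin_l. assert (Rmin d1 d2 <= d2) by apply Rmin_r.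
specialize (H1 y hy ltac:(lra)). specialize (H2 y hy ltac:(lra)).
replace (f y + g y - (f t + g t)) with ((f y - f t) + (g y - g t)) by ring.
eapply Rle_lt_trans. apply Rabs_triang. lra.
Qed.

Lemma RC_scal k f : RC f -> RC (fun t => k * f t).
Proof.
intros Hf t ht e he.
destruct (Hf t ht (e / (Rabs k + 1))) as [d [dp H]].
{ apply Rdiv_lt_0_compat; auto. pose proof (Rabs_pos k). lra. }
exists d. split; auto. intros y hy hyt. specialize (H y hy hyt).
replace (k * f y - k * f t) with (k * (f y - f t)) by ring. rewrite Rabs_mult.
pose proof (Rabs_pos k). pose proof (Rabs_pos (f y - f t)).
assert (Rabs k * Rabs (f y - f t) <= Rabs k * (e / (Rabs k + 1))) by nra.
assert (Rabs k * (e / (Rabs k + 1)) < e).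
{ apply Rmult_lt_reg_r with (Rabs k + 1). lra. field_simplify; lra. }
lra.
Qed.

Lemma RC_const k : RC (fun _ => k).
Proof. intros t ht e he. exists 1. split. lra. intros. unfold Rminus. rewrite Rplus_opp_r, Rabs_R0. auto. Qed.

Lemma div_ge_m1 p q : 0 < p -> 0 <= q + p -> -1 <= q / p.
Proof. intros. assert (q / p * p = q) by (field; lra). nra. Qed.
Lemma div_le_1 p q : 0 < p -> q <= p -> q / p <= 1.
Proof. intros. assert (q / p * p = q) by (field; lra). nra. Qed.
Lemma div_nonneg p q : 0 < p -> 0 <= q -> 0 <= q / p.
Proof. intros. unfold Rdiv. apply Rmult_le_pos; auto. left; apply Rinv_0_lt_compat; auto. Qed.

Lemma is_derive_kminus f t l k : is_derive f t l -> is_derive (fun t => k - f t) t (- l).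
Proof.
intros H. assert (H2 := is_derive_minus (fun _ => k) f t 0 l (is_derive_const k t) H).
replace (- l) with (minus 0 l). exact H2. unfold minus, plus, opp; simpl. ring.
Qed.

Lemma is_derive_lin3 f g h t a b c k : is_derive f t a -> is_derive g t b -> is_derive h t c ->
  is_derive (fun t => f t + k * g t + k * h t) t (a + k * b + k * c).
Proof.
intros Ha Hb Hc.
assert (Hb' := is_derive_scal g t k b Hb). assert (Hc' := is_derive_scal h t k c Hc).
assert (H1 := is_derive_plus _ _ _ _ _ Ha Hb').
assert (H2 := is_derive_plus _ _ _ _ _ H1 Hc').
exact H2.
Qed.

Lemma kX r K alpha phi c x s i : 0 < r -> 0 < K -> 0 < alpha -> 0 < phi -> phi < 1 -> 0 < c ->
  0 < c + x -> 0 <= s + (c + x) -> 0 <= i + (c + x) -> -K <= x -> x < 0 ->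
  (2 * r + 2 * alpha) * x <= fX r K alpha phi c x s i.
Proof.
intros. assert (Hu := div_ge_m1 (c + x) s ltac:(auto) ltac:(auto)).
assert (Hv := div_ge_m1 (c + x) i ltac:(auto) ltac:(auto)).
assert (Hw := div_ge_m1 K x ltac:(auto) ltac:(lra)).
assert (E : fX r K alpha phi c x s i = r * x - r * x * (x / K) - alpha * x * (s / (c + x)) - phi * alpha * x * (i / (c + x))) by (unfold fX, Rdiv; ring).
rewrite E. set (u := s / (c + x)) in *. set (v := i / (c + x)) in *. set (w := x / K) in *.
assert (0 <= - x * (w + 1)) by nra.
assert (0 <= - x * (u + 1)) by nra.
assert (0 <= - x * (v + 1)) by nra.
assert (0 <= r * (- x * (w + 1))) by nra.
assert (0 <= alpha * (- x * (u + 1))) by nra.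
assert (0 <= phi * alpha * (- x * (v + 1))) by (apply Rmult_le_pos; nra).
assert (0 <= (1 - phi) * alpha * (- x)) by (apply Rmult_le_pos; nra).
nra.
Qed.

Lemma kS alpha c m1 lambda a d x s a0 : 0 < alpha -> 0 < m1 -> 0 < lambda -> 0 < c -> 0 < a -> 0 < d ->
  0 < c + x -> 0 < a + a0 -> 0 <= 2 * a0 + a -> s < 0 ->
  (m1 * alpha + lambda) * s <= fS alpha c m1 lambda a d x s a0.
Proof.
intros. assert (Hp := div_le_1 (c + x) x ltac:(auto) ltac:(lra)).
assert (Hq := div_ge_m1 (a + a0) a0 ltac:(auto) ltac:(lra)).
assert (E : fS alpha c m1 lambda a d x s a0 = m1 * alpha * s * (x / (c + x)) - lambda * s * (a0 / (a + a0)) - d * s) by (unfold fS, Rdiv; ring).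
rewrite E. set (p := x / (c + x)) in *. set (q := a0 / (a + a0)) in *.
assert (0 <= m1 * alpha * ((- s) * (1 - p))) by (apply Rmult_le_pos; nra).
assert (0 <= lambda * ((- s) * (q + 1))) by (apply Rmult_le_pos; nra).
nra.
Qed.

Lemma kA gamma sigma eta s i a0 : 0 < eta -> 0 <= gamma + sigma * (s + i) -> a0 < 0 ->
  0 * a0 <= fA gamma sigma eta s i a0.
Proof. intros. unfold fA. nra. Qed.

Lemma kI alpha phi c m2 lambda a d delta x s i a0 : 0 < alpha -> 0 < phi -> 0 < m2 -> 0 < lambda ->
  0 < c -> 0 < d -> 0 < delta ->
  0 < c + x -> 0 < a + a0 -> 0 <= a0 -> 0 <= s -> i < 0 ->
  (m2 * phi * alpha) * i <= fI alpha phi c m2 lambda a d delta x s i a0.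
Proof.
intros. assert (Hp := div_le_1 (c + x) x ltac:(auto) ltac:(lra)).
assert (Hq := div_nonneg (a + a0) (a0 * s) ltac:(auto) ltac:(nra)).
assert (E : fI alpha phi c m2 lambda a d delta x s i a0 = m2 * phi * alpha * i * (x / (c + x)) + lambda * (a0 * s / (a + a0)) - (d + delta) * i) by (unfold fI, Rdiv; ring).
rewrite E. set (p := x / (c + x)) in *. set (q := a0 * s / (a + a0)) in *.
assert (0 <= m2 * phi * alpha * ((- i) * (1 - p))) by (repeat apply Rmult_le_pos; nra).
nra.
Qed.

Lemma bX r K alpha phi c x s i : 0 < r -> 0 < K -> 0 < alpha -> 0 < phi -> 0 < c ->
  0 <= s -> 0 <= i -> K <= x -> fX r K alpha phi c x s i <= 0.
Proof.
intros. assert (Hw : 1 <= x / K).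
{ assert (x / K * K = x) by (field; lra). nra. }
assert (Hu := div_nonneg (c + x) (x * s) ltac:(lra) ltac:(nra)).
assert (Hv := div_nonneg (c + x) (x * i) ltac:(lra) ltac:(nra)).
assert (E : fX r K alpha phi c x s i = r * x * (1 - x / K) - alpha * (x * s / (c + x)) - phi * alpha * (x * i / (c + x))) by (unfold fX, Rdiv; ring).
rewrite E.
assert (0 <= r * x * (x / K - 1)) by (apply Rmult_le_pos; nra).
assert (0 <= phi * alpha * (x * i / (c + x))) by (apply Rmult_le_pos; [apply Rmult_le_pos; lra | exact Hv]).
nra.
Qed.

Lemma bV r K alpha phi c m1 m2 lambda a d delta M x s i a0 :
  0 < r -> 0 < K -> 0 < alpha -> 0 < phi -> 0 < c -> 0 < m1 -> 0 < m2 -> m2 < m1 ->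
  0 < lambda -> 0 < a -> 0 < d -> 0 < delta ->
  0 <= x -> x <= M -> 0 <= s -> 0 <= i -> 0 <= a0 ->
  fX r K alpha phi c x s i + / m1 * fS alpha c m1 lambda a d x s a0
    + / m1 * fI alpha phi c m2 lambda a d delta x s i a0
  <= (r + d) * M - d * (x + / m1 * s + / m1 * i).
Proof.
intros.
assert (Hw := div_nonneg K x ltac:(lra) ltac:(lra)).
assert (HZ := div_nonneg (c + x) (x * s) ltac:(lra) ltac:(nra)).
assert (HP := div_nonneg (c + x) (x * i) ltac:(lra) ltac:(nra)).
assert (Hq := div_nonneg (a + a0) (a0 * s) ltac:(lra) ltac:(nra)).
set (im := / m1).
assert (Him : m1 * im = 1) by (unfold im; field; lra).
assert (Him0 : 0 < im) by (unfold im; apply Rinv_0_lt_compat; lra).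
assert (E : fX r K alpha phi c x s i + im * fS alpha c m1 lambda a d x s a0
    + im * fI alpha phi c m2 lambda a d delta x s i a0 =
    r * x - r * x * (x / K) - alpha * (x * s / (c + x)) - phi * alpha * (x * i / (c + x))
    + im * (m1 * alpha * (x * s / (c + x)) - lambda * (a0 * s / (a + a0)) - d * s)
    + im * (m2 * phi * alpha * (x * i / (c + x)) + lambda * (a0 * s / (a + a0)) - (d + delta) * i))
  by (unfold fX, fS, fI, Rdiv; ring).
rewrite E. set (w := x / K) in *. set (Z := x * s / (c + x)) in *. set (P := x * i / (c + x)) in *.
set (q := a0 * s / (a + a0)) in *.
assert (E2 : im * (m1 * alpha * Z) = alpha * Z) by (replace (im * (m1 * alpha * Z)) with ((m1 * im) * alpha * Z) by ring; rewrite Him; ring).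
assert (Hm2 : m2 * im <= 1) by nra.
assert (0 <= r * (x * w)) by (apply Rmult_le_pos; nra).
assert (0 <= phi * alpha * P * (1 - m2 * im)) by (apply Rmult_le_pos; [apply Rmult_le_pos; [nra|exact HP]| lra]).
assert (0 <= im * delta * i) by (repeat apply Rmult_le_pos; lra).
assert (r * x <= r * M) by nra.
nra.
Qed.

Lemma RC_kminus k f : RC f -> RC (fun t => k - f t).
Proof.
intros Hf t ht e he. destruct (Hf t ht e he) as [d [dp H]]. exists d. split; auto.
intros y hy hyt. replace (k - f y - (k - f t)) with (- (f y - f t)) by ring.
rewrite Rabs_Ropp. auto.
Qed.

Lemma lb_of z y dl : Rabs (y - z) < dl -> 0 <= z -> - dl <= y.
Proof. unfold Rabs; destruct Rcase_abs; lra. Qed.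

Theorem theorem1
  (r K alpha phi c m1 m2 lambda a d delta gamma sigma eta : R)
  (hr : 0 < r) (hK : 0 < K) (halpha : 0 < alpha) (hphi : 0 < phi)
  (hc : 0 < c) (hm1 : 0 < m1) (hm2 : 0 < m2) (hlambda : 0 < lambda)
  (ha : 0 < a) (hd : 0 < d) (hdelta : 0 < delta) (hgamma : 0 < gamma)
  (hsigma : 0 < sigma) (heta : 0 < eta)
  (hphi1 : phi < 1) (hm12 : m2 < m1)
  (X S I A : R -> R)
  (cX : filterlim X (at_right 0) (locally (X 0)))
  (cS : filterlim S (at_right 0) (locally (S 0)))
  (cI : filterlim I (at_right 0) (locally (I 0)))
  (cA : filterlim A (at_right 0) (locally (A 0)))
  (dX : forall t, 0 < t -> is_derive X t (fX r K alpha phi c (X t) (S t) (I t)))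
  (dS : forall t, 0 < t -> is_derive S t (fS alpha c m1 lambda a d (X t) (S t) (A t)))
  (dI : forall t, 0 < t ->
        is_derive I t (fI alpha phi c m2 lambda a d delta (X t) (S t) (I t) (A t)))
  (dA : forall t, 0 < t -> is_derive A t (fA gamma sigma eta (S t) (I t) (A t)))
  (h0 : in_D r d sigma eta (Rmax (X 0) K) (X 0) (S 0) (I 0) (A 0)) :
  exists B : R, forall t, 0 <= t ->
    Rabs (X t) <= B /\ Rabs (S t) <= B /\ Rabs (I t) <= B /\ Rabs (A t) <= B.
Proof.
pose proof (RC_of X (fun t => fX r K alpha phi c (X t) (S t) (I t)) dX cX) as RX.
pose proof (RC_of S (fun t => fS alpha c m1 lambda a d (X t) (S t) (A t)) dS cS) as RS.
pose proof (RC_of I (fun t => fI alpha phi c m2 lambda a d delta (X t) (S t) (I t) (A t)) dI cI) as RI.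
pose proof (RC_of A (fun t => fA gamma sigma eta (S t) (I t) (A t)) dA cA) as RA.
destruct h0 as [X0 [S0 [I0 [A0 _]]]].
assert (Qpos : forall t, 0 <= t -> 0 <= X t /\ 0 <= S t /\ 0 <= I t /\ 0 <= A t).
{ apply cont_ind.
  - auto.
  - intros s hs Hall. destruct (Hall s (conj hs (Rle_refl s))) as [Xs [Ss [Is As]]].
    set (dl := Rmin (Rmin (c/2) (a/2)) (Rmin K (Rmin (gamma/(4*sigma)) 1))).
    assert (dlp : 0 < dl).
    { unfold dl. repeat apply Rmin_pos; try lra. apply Rdiv_lt_0_compat; lra. }
    assert (dl1 : dl <= c/2) by (unfold dl; eapply Rle_trans; [apply Rmin_l| apply Rmin_l]).
    assert (dl2 : dl <= a/2) by (unfold dl; eapply Rle_trans; [apply Rmin_l| apply Rmin_r]).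
    assert (dl3 : dl <= K) by (unfold dl; eapply Rle_trans; [apply Rmin_r| apply Rmin_l]).
    assert (dl4 : dl <= gamma/(4*sigma)).
    { unfold dl; eapply Rle_trans; [apply Rmin_r|]. eapply Rle_trans; [apply Rmin_r| apply Rmin_l]. }
    assert (dl5 : 4 * sigma * dl <= gamma).
    { assert (4*sigma*(gamma/(4*sigma)) = gamma) by (field; lra). nra. }
    destruct (RX s hs dl dlp) as [d1 [d1p H1]].
    destruct (RS s hs dl dlp) as [d2 [d2p H2]].
    destruct (RI s hs dl dlp) as [d3 [d3p H3]].
    destruct (RA s hs dl dlp) as [d4 [d4p H4]].
    set (m := Rmin (Rmin d1 d2) (Rmin d3 d4)).
    assert (mp : 0 < m) by (unfold m; repeat apply Rmin_pos; lra).
    assert (m1' : m <= d1) by (unfold m; eapply Rle_trans; [apply Rmin_l| apply Rmin_l]).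
    assert (m2' : m <= d2) by (unfold m; eapply Rle_trans; [apply Rmin_l| apply Rmin_r]).
    assert (m3' : m <= d3) by (unfold m; eapply Rle_trans; [apply Rmin_r| apply Rmin_l]).
    assert (m4' : m <= d4) by (unfold m; eapply Rle_trans; [apply Rmin_r| apply Rmin_r]).
    set (eps := m / 2).
    assert (LB : forall t, s <= t <= s + eps -> -dl <= X t /\ -dl <= S t /\ -dl <= I t /\ -dl <= A t).
    { intros t Ht. assert (Hts : Rabs (t - s) < m) by (rewrite Rabs_right; unfold eps in Ht; lra).
      split; [|split; [|split]].
      - apply (lb_of (X s)); auto. apply H1; lra.
      - apply (lb_of (S s)); auto. apply H2; lra.
      - apply (lb_of (I s)); auto. apply H3; lra.
      - apply (lb_of (A s)); auto. apply H4; lra. }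
    assert (PX : forall t1, s < t1 <= s + eps -> 0 <= X t1).
    { intros t1 Ht1.
      apply (barrier X (fun t => fX r K alpha phi c (X t) (S t) (I t)) s t1 (2*r+2*alpha)); auto; try lra.
      - intros t Ht; apply dX; lra.
      - intros t Ht Hn. destruct (LB t ltac:(lra)) as [lx [ls [li la]]]. apply kX; auto; lra. }
    assert (PS : forall t1, s < t1 <= s + eps -> 0 <= S t1).
    { intros t1 Ht1.
      apply (barrier S (fun t => fS alpha c m1 lambda a d (X t) (S t) (A t)) s t1 (m1*alpha+lambda)); auto; try lra.
      - intros t Ht; apply dS; lra.
      - intros t Ht Hn. destruct (LB t ltac:(lra)) as [lx [ls [li la]]]. apply kS; auto; lra. }
    assert (PA : forall t1, s < t1 <= s + eps -> 0 <= A t1).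
    { intros t1 Ht1.
      apply (barrier A (fun t => fA gamma sigma eta (S t) (I t) (A t)) s t1 0); auto; try lra.
      - intros t Ht; apply dA; lra.
      - intros t Ht Hn. destruct (LB t ltac:(lra)) as [lx [ls [li la]]]. apply kA; auto.
        assert (0 <= sigma * (S t + I t + 2*dl)) by (apply Rmult_le_pos; lra). lra. }
    assert (PI : forall t1, s < t1 <= s + eps -> 0 <= I t1).
    { intros t1 Ht1.
      apply (barrier I (fun t => fI alpha phi c m2 lambda a d delta (X t) (S t) (I t) (A t)) s t1 (m2*phi*alpha)); auto; try lra.
      - intros t Ht; apply dI; lra.
      - intros t Ht Hn. destruct (LB t ltac:(lra)) as [lx [ls [li la]]].
        assert (0 <= A t) by (apply PA; lra). assert (0 <= S t) by (apply PS; lra).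
        apply kI; auto; lra. }
    exists eps. split. unfold eps; lra.
    intros tau [h1 h2]. destruct (Rle_lt_or_eq_dec s tau h1) as [lt|eq].
    + repeat split; [apply PX|apply PS|apply PI|apply PA]; lra.
    + subst tau. auto.
  - intros s sp Hlt. repeat split.
    + apply (closed_nonneg X s RX sp). intros tau Ht. apply (Hlt tau Ht).
    + apply (closed_nonneg S s RS sp). intros tau Ht. apply (Hlt tau Ht).
    + apply (closed_nonneg I s RI sp). intros tau Ht. apply (Hlt tau Ht).
    + apply (closed_nonneg A s RA sp). intros tau Ht. apply (Hlt tau Ht). }
set (M := Rmax (X 0) K).
assert (XbM : forall t, 0 <= t -> X t <= M).
{ intros t ht. destruct (Rle_lt_or_eq_dec 0 t ht) as [tp|t0]; [| subst; unfold M; apply Rmax_l].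
  assert (0 <= M - X t); [|lra].
  apply (barrier (fun t => M - X t) (fun t => - fX r K alpha phi c (X t) (S t) (I t)) 0 t 0); try lra.
  - apply RC_kminus; auto.
  - intros; apply is_derive_kminus; apply dX; lra.
  - unfold M. pose proof (Rmax_l (X 0) K). lra.
  - intros tau Ht Hn. rewrite Rmult_0_l. destruct (Qpos tau ltac:(lra)) as [q1 [q2 [q3 q4]]].
    pose proof (Rmax_r (X 0) K). fold M in H.
    pose proof (bX r K alpha phi c (X tau) (S tau) (I tau) hr hK halpha hphi hc q2 q3 ltac:(lra)). lra. }
set (V := fun t => X t + / m1 * S t + / m1 * I t).
set (L := Rmax (V 0) ((r + d) * M / d)).
assert (VbL : forall t, 0 <= t -> V t <= L).
{ intros t ht. destruct (Rle_lt_or_eq_dec 0 t ht) as [tp|t0]; [| subst; unfold L; apply Rmax_l].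
  assert (0 <= L - V t); [|lra].
  apply (barrier (fun t => L - V t) (fun t => - (fX r K alpha phi c (X t) (S t) (I t)
     + / m1 * fS alpha c m1 lambda a d (X t) (S t) (A t)
     + / m1 * fI alpha phi c m2 lambda a d delta (X t) (S t) (I t) (A t))) 0 t 0); try lra.
  - apply RC_kminus. unfold V. apply RC_plus. apply RC_plus. auto. apply RC_scal; auto. apply RC_scal; auto.
  - intros; apply is_derive_kminus. unfold V. apply is_derive_lin3; [apply dX|apply dS|apply dI]; lra.
  - unfold L. pose proof (Rmax_l (V 0) ((r + d) * M / d)). lra.
  - intros tau Ht Hn. rewrite Rmult_0_l. destruct (Qpos tau ltac:(lra)) as [q1 [q2 [q3 q4]]].
    pose proof (Rmax_r (V 0) ((r + d) * M / d)). fold L in H.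
    pose proof (bV r K alpha phi c m1 m2 lambda a d delta M (X tau) (S tau) (I tau) (A tau)
      hr hK halpha hphi hc hm1 hm2 hm12 hlambda ha hd hdelta q1 (XbM tau ltac:(lra)) q2 q3 q4).
    assert ((r + d) * M / d * d = (r + d) * M) by (field; lra).
    unfold V in Hn. nra. }
set (LA := Rmax (A 0) ((gamma + sigma * (m1 * L)) / eta)).
assert (SIb : forall t, 0 <= t -> S t + I t <= m1 * L).
{ intros t ht. destruct (Qpos t ht) as [q1 [q2 [q3 q4]]].
  assert (E : S t + I t = m1 * (/ m1 * S t + / m1 * I t)) by (field; lra).
  pose proof (VbL t ht). unfold V in H. rewrite E. nra. }
assert (AbL : forall t, 0 <= t -> A t <= LA).
{ intros t ht. destruct (Rle_lt_or_eq_dec 0 t ht) as [tp|t0]; [| subst; unfold LA; apply Rmax_l].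
  assert (0 <= LA - A t); [|lra].
  apply (barrier (fun t => LA - A t) (fun t => - fA gamma sigma eta (S t) (I t) (A t)) 0 t 0); try lra.
  - apply RC_kminus; auto.
  - intros; apply is_derive_kminus; apply dA; lra.
  - unfold LA. pose proof (Rmax_l (A 0) ((gamma + sigma * (m1 * L)) / eta)). lra.
  - intros tau Ht Hn. rewrite Rmult_0_l.
    pose proof (Rmax_r (A 0) ((gamma + sigma * (m1 * L)) / eta)). fold LA in H.
    pose proof (SIb tau ltac:(lra)).
    assert ((gamma + sigma * (m1 * L)) / eta * eta = gamma + sigma * (m1 * L)) by (field; lra).
    unfold fA. nra. }
exists (Rmax (Rmax M (m1 * L)) LA). intros t ht.
assert (B1 : M <= Rmax (Rmax M (m1 * L)) LA) by (eapply Rle_trans; [apply Rmax_l| apply Rmax_l]).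
assert (B2 : m1 * L <= Rmax (Rmax M (m1 * L)) LA) by (eapply Rle_trans; [apply Rmax_r| apply Rmax_l]).
assert (B3 : LA <= Rmax (Rmax M (m1 * L)) LA) by apply Rmax_r.
destruct (Qpos t ht) as [q1 [q2 [q3 q4]]].
pose proof (XbM t ht). pose proof (SIb t ht). pose proof (AbL t ht).
rewrite !Rabs_right by lra. repeat split; lra.
Qed.
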